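(* With $F_n$ as defined in the context, $$\int_0^{1+\frac{(\log n)^2}{n}}F_n(w)\,dw=O(n\log\log n)\qquad(n\to\infty).$$
   Context: For $w>0$ and integer $n\ge1$ let $a_n(w)=\sum_{j=0}^n w^j$, $b_n(w)=\sum_{j=1}^n jw^j$, $c_n(w)=\sum_{j=0}^n j^2w^j$, and $$F_n(w)=\frac{1}{2\sqrt{w}}\sqrt{\frac{c_n(w)}{a_n(w)}}\sqrt{\frac{a_n(w)c_n(w)-b_n(w)^2}{w\,a_n(w)^2}}.$$ (For the harmonic Kac ensemble with $m=n$, $\int_a^bF_n(w)\,dw$ equals the expected number of zeros in $\{a<|z|^2<b\}$.) $\log$ is the natural logarithm. *)

(* Defs.v *)
From HB Require Import structures.
From mathcomp Require Import all_boot all_order all_algebra.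
From mathcomp Require Import all_classical all_reals all_analysis.
Set Implicit Arguments. Unset Strict Implicit. Unset Printing Implicit Defensive.
Import Order.TTheory GRing.Theory Num.Theory.
Local Open Scope ring_scope.

Definition kac_a {R : realType} (n : nat) (w : R) : R :=
  \sum_(0 <= j < n.+1) w ^+ j.
Definition kac_b {R : realType} (n : nat) (w : R) : R :=
  \sum_(1 <= j < n.+1) j%:R * w ^+ j.
Definition kac_c {R : realType} (n : nat) (w : R) : R :=
  \sum_(0 <= j < n.+1) (j ^ 2)%:R * w ^+ j.

(* F_n(w); only its values for w > 0 matter (the point w = 0 is null). *)
Definition kac_F {R : realType} (n : nat) (w : R) : R :=
  (2 * Num.sqrt w)^-1
  * Num.sqrt (kac_c n w / kac_a n w)
  * Num.sqrt ((kac_a n w * kac_c n w - kac_b n w ^+ 2) / (w * kac_a n w ^+ 2)).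

(* Main.v *)
Require Import Defs.
From HB Require Import structures.
From mathcomp Require Import all_boot all_order all_algebra.
From mathcomp Require Import all_classical all_reals all_analysis.
From mathcomp Require Import ring lra measurable_realfun.
Import Order.TTheory GRing.Theory Num.Theory numFieldNormedType.Exports.
Local Open Scope classical_set_scope.
Local Open Scope ring_scope.

Section Alg.
Variable R : realType.
Implicit Types w : R.

Lemma kac_aS n w : kac_a n.+1 w = kac_a n w + w ^+ n.+1.
Proof. by rewrite /kac_a big_nat_recr. Qed.
Lemma kac_bS n w : kac_b n.+1 w = kac_b n w + n.+1%:R * w ^+ n.+1.
Proof. by rewrite /kac_b big_nat_recr. Qed.
Lemma kac_cS n w : kac_c n.+1 w = kac_c n w + (n.+1 ^ 2)%:R * w ^+ n.+1.
Proof. by rewrite /kac_c big_nat_recr. Qed.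

Lemma E1 n w : (1 - w) * kac_a n w = 1 - w ^+ n.+1.
Proof.
elim: n => [|n IH]; first by rewrite /kac_a big_nat1 expr0 expr1 mulr1.
rewrite kac_aS mulrDr IH !exprS; ring.
Qed.

Lemma E2 n w : (1 - w) * kac_b n w = kac_a n w - 1 - n%:R * w ^+ n.+1.
Proof.
elim: n => [|n IH].
  by rewrite /kac_b /kac_a big_geq // big_nat1 expr0; ring.
rewrite kac_bS kac_aS mulrDr IH !exprS; ring.
Qed.

Lemma E3 n w : (1 - w) ^+ 2 * kac_c n w =
  2 * (kac_a n w - 1) - w - (2 * n%:R - 1) * w ^+ n.+1
   - (1 - w) * n%:R ^+ 2 * w ^+ n.+1.
Proof.
elim: n => [|n IH].
  by rewrite /kac_c /kac_a !big_nat1 expr0 expr1 /=; ring.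
rewrite kac_cS kac_aS mulrDr IH natrX !exprS; ring.
Qed.


Lemma a_ge1 n w : 0 <= w -> 1 <= kac_a n w.
Proof.
move=> w0; elim: n => [|n IH]; first by rewrite /kac_a big_nat1 expr0.
rewrite kac_aS; apply: (le_trans IH); rewrite lerDl; exact: exprn_ge0.
Qed.

Lemma c_ge0 n w : 0 <= w -> 0 <= kac_c n w.
Proof.
move=> w0; rewrite /kac_c; apply: sumr_ge0 => i _.
by apply: mulr_ge0; [exact: ler0n|exact: exprn_ge0].
Qed.

Lemma c_le n w : 0 <= w -> kac_c n w <= n%:R ^+ 2 * kac_a n w.
Proof.
move=> w0; rewrite /kac_c /kac_a mulr_sumr; apply: ler_sum_nat => i /andP[_ hi].
apply: ler_wpM2r; first exact: exprn_ge0.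
rewrite -natrX ler_nat leq_sqr.
by rewrite -ltnS.
Qed.

Lemma c_bnd1 n w : 0 <= w <= 1 ->
  (1 - w) ^+ 2 * kac_c n w <= 2 * w * kac_a n w.
Proof.
move=> /andP[w0 w1]; rewrite E3.
have e1 := E1 n w.
have hP : w ^+ n.+1 <= w.
  by rewrite exprS ler_piMr // exprn_ile1.
have hP0 : 0 <= w ^+ n.+1 by exact: exprn_ge0.
have hn : 0 <= n%:R :> R by exact: ler0n.
have hn2 : 0 <= (1 - w) * n%:R ^+ 2 * w ^+ n.+1.
  by rewrite mulr_ge0 // mulr_ge0 // ?subr_ge0 // exprn_ge0.
have h2 : 0 <= n%:R * w ^+ n.+1 by exact: mulr_ge0.
nra.
Qed.

Lemma d_bnd n w : 1 <= w ->
  (w - 1) ^+ 2 * (n%:R ^+ 2 * kac_a n w - 2 * n%:R * kac_b n w + kac_c n w)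
    <= 2 * w * kac_a n w.
Proof.
move=> w1.
have e1 := E1 n w; have e2 := E2 n w; have e3 := E3 n w.
move: e1 e2 e3.
set a := kac_a n w; set b := kac_b n w; set c := kac_c n w; set P := w ^+ n.+1.
move=> e1 e2 e3.
have {}e1 : (1 - w) * a - 1 + P = 0 by rewrite e1; ring.
have {}e2 : (1 - w) * b - a + 1 + n%:R * P = 0 by rewrite e2; ring.
have {}e3 : (1 - w) ^+ 2 * c - (2 * (a - 1) - w - (2 * n%:R - 1) * P
   - (1 - w) * n%:R ^+ 2 * P) = 0 by rewrite e3; ring.
have T : (w - 1) ^+ 2 * (n%:R ^+ 2 * a - 2 * n%:R * b + c) =
   2 * w * a - 2 * w - P - (2 * n%:R - 1) * w - (w - 1) * n%:R ^+ 2
   + ((n%:R ^+ 2 * (1 - w) + 2 - 2 * n%:R) * ((1 - w) * a - 1 + P)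
     - 2 * n%:R * (1 - w) * ((1 - w) * b - a + 1 + n%:R * P)
     + ((1 - w) ^+ 2 * c - (2 * (a - 1) - w - (2 * n%:R - 1) * P
   - (1 - w) * n%:R ^+ 2 * P))) by ring.
rewrite T e1 e2 e3 !mulr0 subr0 !addr0.
have hP0 : 0 <= P by rewrite /P exprn_ge0 // (le_trans ler01).
have hn : 0 <= n%:R :> R by exact: ler0n.
have hn2 : 0 <= (w - 1) * n%:R ^+ 2 by rewrite mulr_ge0 ?subr_ge0 // exprn_ge0.
nra.
Qed.


Definition kC n w := (kac_a n w * kac_c n w - kac_b n w ^+ 2) / (w * kac_a n w ^+ 2).

Lemma F_ge0 n w : 0 <= kac_F n w.
Proof.
rewrite /kac_F; apply: mulr_ge0; last exact: sqrtr_ge0.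
apply: mulr_ge0; last exact: sqrtr_ge0.
by rewrite invr_ge0 mulr_ge0 // sqrtr_ge0.
Qed.

Lemma F_sq n w : 0 < w ->
  kac_F n w ^+ 2 = (kac_c n w / kac_a n w) * Num.sqrt (kC n w) ^+ 2 / (4 * w).
Proof.
move=> w0; have a1 := @a_ge1 n w (ltW w0); have c0 := @c_ge0 n w (ltW w0).
have a0 : kac_a n w != 0 by rewrite gt_eqF // (lt_le_trans ltr01).
have hB : Num.sqrt (kac_c n w / kac_a n w) ^+ 2 = kac_c n w / kac_a n w.
  by rewrite sqr_sqrtr // divr_ge0 // (le_trans ler01).
have hw : Num.sqrt w ^+ 2 = w by rewrite sqr_sqrtr // ltW.
rewrite /kac_F -/(kC n w) !exprMn hB exprVn exprMn hw.
have w0' : w != 0 by rewrite gt_eqF.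
field; rewrite w0' /=; done.
Qed.

Lemma S_le n w : 0 < w -> Num.sqrt (kC n w) ^+ 2 <= kac_c n w / kac_a n w / w.
Proof.
move=> w0; have a1 := @a_ge1 n w (ltW w0); have c0 := @c_ge0 n w (ltW w0).
have a0 : 0 < kac_a n w by rewrite (lt_le_trans ltr01).
have rhs0 : 0 <= kac_c n w / kac_a n w / w by rewrite !divr_ge0 // ltW.
have [k0|k0] := leP 0 (kC n w); last first.
  have -> : Num.sqrt (kC n w) = 0 by apply/eqP; rewrite sqrtr_eq0 ltW.
  by rewrite expr0n.
rewrite sqr_sqrtr //.
have -> : kC n w = kac_c n w / kac_a n w / w
   - kac_b n w ^+ 2 / (w * kac_a n w ^+ 2).
  rewrite /kC; field; rewrite gt_eqF // gt_eqF //.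
rewrite lerBlDr lerDl; apply: divr_ge0; [exact: sqr_ge0 | apply: mulr_ge0; [exact: ltW | exact: sqr_ge0]].
Qed.

Lemma S_le2 n w : 1 <= w -> Num.sqrt (kC n w) ^+ 2 * (w - 1) ^+ 2 <= 2.
Proof.
move=> w1; have w0 : 0 < w by rewrite (lt_le_trans ltr01).
have a1 := @a_ge1 n w (ltW w0); have c0 := @c_ge0 n w (ltW w0).
have a0 : 0 < kac_a n w by rewrite (lt_le_trans ltr01).
have [k0|k0] := leP 0 (kC n w); last first.
  have -> : Num.sqrt (kC n w) = 0 by apply/eqP; rewrite sqrtr_eq0 ltW.
  by rewrite expr0n mul0r.
rewrite sqr_sqrtr //.
set d := n%:R ^+ 2 * kac_a n w - 2 * n%:R * kac_b n w + kac_c n w.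
have -> : kC n w = d / (kac_a n w * w)
   - (n%:R * kac_a n w - kac_b n w) ^+ 2 / (w * kac_a n w ^+ 2).
  rewrite /kC /d; field; rewrite gt_eqF // gt_eqF //.
have hd := @d_bnd n w w1; rewrite -/d in hd.
have q0 : 0 <= (n%:R * kac_a n w - kac_b n w) ^+ 2 / (w * kac_a n w ^+ 2).
  apply: divr_ge0; [exact: sqr_ge0 | apply: mulr_ge0; [exact: ltW | exact: sqr_ge0]].
have h2 : d / (kac_a n w * w) * (w - 1) ^+ 2 <= 2.
  rewrite mulrC mulrA ler_pdivrMr ?mulr_gt0 //.
  by apply: (le_trans hd); rewrite -mulrA [w * _]mulrC.
apply: le_trans h2; rewrite ler_wpM2r ?sqr_ge0 //.
by rewrite lerBlDr lerDl.
Qed.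


Lemma bnd1 n w : (2 <= n)%N -> 0 < w <= 1 ->
  kac_F n w <= 4 * n%:R ^+ 2 / (1 + n%:R * (1 - w)) ^+ 2.
Proof.
move=> n2 /andP[w0 w1].
have a1 := @a_ge1 n w (ltW w0); have c0 := @c_ge0 n w (ltW w0).
have a0 : 0 < kac_a n w by rewrite (lt_le_trans ltr01).
have N2 : 2 <= n%:R :> R by rewrite (ler_nat R 2 n).
set N := n%:R : R in N2 *.
set B := kac_c n w / kac_a n w.
have B0 : 0 <= B by rewrite divr_ge0 // ltW.
set q := B / w.
have q0 : 0 <= q by rewrite divr_ge0 // ltW.
have hS := @S_le n w w0; rewrite -/B -/q in hS.
have hS0 : 0 <= Num.sqrt (kC n w) ^+ 2 by exact: sqr_ge0.
have hF := @F_sq n w w0; rewrite -/B in hF.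
have F0 := F_ge0 n w.
have hFq : kac_F n w <= q / 2.
  have q2 : 0 <= q / 2 by rewrite divr_ge0. rewrite -ler_sqr ?nnegrE // hF.
  have -> : (q / 2) ^+ 2 = B * q / (4 * w) by rewrite /q; field; rewrite gt_eqF.
  rewrite ler_pM2r ?invr_gt0 ?mulr_gt0 //.
  by rewrite ler_wpM2l.
have hqx : q * (1 - w) ^+ 2 <= 2.
  have h := @c_bnd1 n w; rewrite w1 (ltW w0) in h; have {}h := h isT.
  have -> : q * (1 - w) ^+ 2 = ((1 - w) ^+ 2 * kac_c n w) / (w * kac_a n w).
    by rewrite /q /B; field; rewrite !gt_eqF.
  by rewrite ler_pdivrMr ?mulr_gt0 //; apply: (le_trans h); rewrite mulrA.
have hqw : q * w <= N ^+ 2.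
  rewrite /q divfK ?gt_eqF // /B ler_pdivrMr //.
  exact: c_le (ltW w0).
have hq : q <= 2 * N ^+ 2.
  have [wh|wh] := leP (2^-1) w.
    apply: le_trans (_ : 2 * (q * w) <= _); last by rewrite ler_pM2l.
    nra.
  have hx : 2^-1 <= 1 - w by rewrite lerBrDr -lerBrDl; lra.
  have : q * 2^-1 ^+ 2 <= 2.
    apply: le_trans hqx; rewrite ler_wpM2l // ler_sqr ?nnegrE //; lra.
  nra.
have hpos : 0 < (1 + N * (1 - w)) ^+ 2.
  by rewrite exprn_gt0 // ltr_pwDl // mulr_ge0 ?subr_ge0 //; lra.
rewrite ler_pdivlMr //.
have hsq : (1 + N * (1 - w)) ^+ 2 <= 2 + 2 * N ^+ 2 * (1 - w) ^+ 2.
  have := sqr_ge0 (1 - N * (1 - w)); nra.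
apply: le_trans (_ : q / 2 * (2 + 2 * N ^+ 2 * (1 - w) ^+ 2) <= _).
  apply: le_trans (_ : kac_F n w * (2 + 2 * N ^+ 2 * (1 - w) ^+ 2) <= _).
    by rewrite ler_wpM2l.
  by rewrite ler_wpM2r // addr_ge0 // mulr_ge0 // ?sqr_ge0 // mulr_ge0 // sqr_ge0.
have hN : 0 <= N ^+ 2 by exact: sqr_ge0.
nra.
Qed.


Lemma bnd2 n w : 1 <= w ->
  kac_F n w <= 2 * n%:R ^+ 2 / (1 + n%:R * (w - 1)).
Proof.
move=> w1; have w0 : 0 < w by rewrite (lt_le_trans ltr01).
have a1 := @a_ge1 n w (ltW w0); have c0 := @c_ge0 n w (ltW w0).
have a0 : 0 < kac_a n w by rewrite (lt_le_trans ltr01).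
have N0 : 0 <= n%:R :> R by exact: ler0n.
set N := n%:R : R in N0 *.
set B := kac_c n w / kac_a n w.
have B0 : 0 <= B by rewrite divr_ge0 // ltW.
have BN : B <= N ^+ 2 by rewrite /B ler_pdivrMr //; exact: c_le (ltW w0).
have hS := @S_le n w w0; rewrite -/B in hS.
have hS2 := @S_le2 n w w1.
set S := Num.sqrt (kC n w) ^+ 2 in hS hS2.
have hS0 : 0 <= S by exact: sqr_ge0.
have hF := @F_sq n w w0; rewrite -/B -/S in hF.
have F0 := F_ge0 n w.
have hSN : S <= N ^+ 2.
  apply: (le_trans hS); rewrite ler_pdivrMr //; apply: (le_trans BN).
  by rewrite ler_peMr // sqr_ge0.
have hpos : 0 < 1 + N * (w - 1) by rewrite ltr_pwDl // mulr_ge0 // subr_ge0.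
rewrite ler_pdivlMr //.
have h2 : 0 <= 2 * N ^+ 2 by rewrite mulr_ge0 // sqr_ge0.
have hF2 : 0 <= kac_F n w * (1 + N * (w - 1)) by rewrite mulr_ge0 // ltW.
rewrite -ler_sqr ?nnegrE // exprMn hF.
have hF' : B * S / (4 * w) <= N ^+ 2 * S / 4.
  rewrite ler_pdivrMr ?mulr_gt0 //.
  have -> : N ^+ 2 * S / 4 * (4 * w) = (N ^+ 2 * S) * w by field.
  apply: le_trans (_ : N ^+ 2 * S <= _); first by rewrite ler_wpM2r.
  by rewrite ler_peMr // mulr_ge0 // sqr_ge0.
have hsq : (1 + N * (w - 1)) ^+ 2 <= 2 + 2 * N ^+ 2 * (w - 1) ^+ 2.
  have := sqr_ge0 (1 - N * (w - 1)); nra.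
have P0 : 0 <= (1 + N * (w - 1)) ^+ 2 by exact: sqr_ge0.
have k1 : B * S / (4 * w) * (1 + N * (w - 1)) ^+ 2 <= N ^+ 2 * S / 4 * (1 + N * (w - 1)) ^+ 2.
  by rewrite ler_wpM2r.
have k2 : N ^+ 2 * S / 4 * (1 + N * (w - 1)) ^+ 2 <= N ^+ 2 * S / 4 * (2 + 2 * N ^+ 2 * (w - 1) ^+ 2).
  by rewrite ler_wpM2l // divr_ge0 // mulr_ge0 // sqr_ge0.
apply: (le_trans k1); apply: (le_trans k2).
have hN : 0 <= N ^+ 2 by exact: sqr_ge0.
have e : N ^+ 2 * S / 4 * (2 + 2 * N ^+ 2 * (w - 1) ^+ 2)
   = N ^+ 2 * S / 2 + N ^+ 2 * N ^+ 2 * (S * (w - 1) ^+ 2) / 2 by field.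
rewrite e.
have h3 : N ^+ 2 * S <= N ^+ 2 * N ^+ 2 by rewrite ler_wpM2l.
have h4 : N ^+ 2 * N ^+ 2 * (S * (w - 1) ^+ 2) <= N ^+ 2 * N ^+ 2 * 2.
  by rewrite ler_wpM2l // mulr_ge0.
have -> : (2 * N ^+ 2) ^+ 2 = 4 * (N ^+ 2 * N ^+ 2) by ring.
have h5 : 0 <= N ^+ 2 * N ^+ 2 by rewrite mulr_ge0.
lra.
Qed.

End Alg.

Section S.
Variable R : realType.

Lemma dG1 (N x : R) : 1 + N * (1 - x) != 0 ->
  is_derive x 1 (fun w : R => 4 * N * (1 + N * (1 - w))^-1)
     (4 * N ^+ 2 / (1 + N * (1 - x)) ^+ 2).
Proof.
move=> h.
have h1 : is_derive x 1 (fun w : R => 1 + N * (1 - w)) (- N).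
  by apply: is_derive_eq; rewrite /GRing.scale /=; ring.
have h2 := @is_deriveV _ (fun w => 1 + N * (1 - w)) x _ 1 h h1.
have h3 := is_deriveZ (4 * N) h2.
apply: is_derive_eq h3 _.
rewrite /GRing.scale /=.
by field.
Qed.

Lemma dG2 (N x : R) : 0 < 1 + N * (x - 1) ->
  is_derive x 1 (fun w : R => 2 * N * ln (1 + N * (w - 1)))
     (2 * N ^+ 2 / (1 + N * (x - 1))).
Proof.
move=> h.
have h1 : is_derive x 1 (fun w : R => 1 + N * (w - 1)) N.
  by apply: is_derive_eq; rewrite /GRing.scale /=; ring.
have h2 := @is_derive1_comp _ (@ln R) (fun w => 1 + N * (w - 1)) x _ _ (is_derive1_ln h) h1.
have h3 := is_deriveZ (2 * N) h2.
apply: is_derive_eq h3 _.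
rewrite /GRing.scale /=.
by field; rewrite gt_eqF.
Qed.
End S.

Section S.
Variable R : realType.

Lemma cont_poly (f : nat -> R) m k x :
  {for x, continuous (fun w : R => \sum_(m <= j < k) f j * w ^+ j)}.
Proof.
elim: k => [|k IH].
  have -> : (fun w : R => \sum_(m <= j < 0) f j * w ^+ j) = cst 0.
    by apply/funext => w; rewrite big_geq.
  exact: cst_continuous.
have [mk|km] := leqP m k; last first.
  have -> : (fun w : R => \sum_(m <= j < k.+1) f j * w ^+ j) = cst 0.
    by apply/funext => w; rewrite big_geq.
  exact: cst_continuous.
have -> : (fun w : R => \sum_(m <= j < k.+1) f j * w ^+ j) =
   (fun w => \sum_(m <= j < k) f j * w ^+ j + f k * w ^+ k).
  by apply/funext => w; rewrite big_nat_recr.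
apply: continuousD => //.
apply: continuousM; first exact: cst_continuous.
exact: exprn_continuous.
Qed.

Lemma cont_a n x : {for x, continuous (@kac_a R n)}.
Proof.
have -> : @kac_a R n = (fun w : R => \sum_(0 <= j < n.+1) 1 * w ^+ j).
  by apply/funext => w; rewrite /kac_a; apply: eq_bigr => i _; rewrite mul1r.
exact: cont_poly.
Qed.
Lemma cont_b n x : {for x, continuous (@kac_b R n)}.
Proof. exact: cont_poly. Qed.
Lemma cont_c n x : {for x, continuous (@kac_c R n)}.
Proof. exact: cont_poly. Qed.

Lemma cont_sqrt (g : R -> R) x : {for x, continuous g} ->
  {for x, continuous (fun w => Num.sqrt (g w))}.
Proof.
move=> h; apply: (@continuous_comp _ _ _ g (@Num.sqrt R)) => //.
exact: sqrt_continuous.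
Qed.

Lemma cont_F n x : 0 < x -> {for x, continuous (@kac_F R n)}.
Proof.
move=> x0.
have a0 : kac_a n x != 0.
  by rewrite gt_eqF // (lt_le_trans ltr01) // a_ge1 // ltW.
rewrite /kac_F.
apply: continuousM; [apply: continuousM|].
- apply: continuousV; first by rewrite mulf_neq0 // sqrtr_eq0 -ltNge.
  apply: continuousM; first exact: cst_continuous.
  exact: cont_sqrt.
- apply: cont_sqrt; apply: continuousM; first exact: cont_c.
  by apply: continuousV => //; exact: cont_a.
- apply: cont_sqrt; apply: continuousM.
    apply: continuousB; first by apply: continuousM; [exact: cont_a|exact: cont_c].
    by apply: continuousM; exact: cont_b.
  apply: continuousV; first by apply: mulf_neq0; [rewrite gt_eqF | apply: expf_neq0].
  apply: continuousM => //.
  by apply: continuousM; exact: cont_a.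
Qed.
End S.

Section S.
Variable R : realType.
Let mu := @lebesgue_measure R.

Lemma int_step (h f G : R -> R) (a b : R) : a < b ->
  measurable_fun `]a, b] h ->
  (forall x, a < x <= b -> 0 <= h x <= f x) ->
  {within `[a, b], continuous f} ->
  derivable_oo_LRcontinuous G a b ->
  {in `]a, b[, (G^`())%classic =1 f} ->
  (\int[mu]_(x in `]a, b]) (h x)%:E <= (G b - G a)%:E)%E.
Proof.
move=> ab mh hf cf dG Gf.
have mf : measurable_fun `[a, b] f.
  by apply: subspace_continuous_measurable_fun => //.
have mf' : measurable_fun `]a, b] f.
  apply: measurable_funS mf => //.
  by apply: subset_itvr; rewrite bnd_simp.
apply: (@le_trans _ _ (\int[mu]_(x in `]a, b]) (f x)%:E)%E).
  apply: ge0_le_integral => //.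
  - by move=> x; rewrite /= in_itv /= => /hf /andP[h0 _]; rewrite lee_fin.
  - by apply/measurable_EFinP.
  - by apply/measurable_EFinP.
  - by move=> x; rewrite /= in_itv /= => /hf /andP[_ h1]; rewrite lee_fin.
rewrite integral_itv_obnd_cbnd; last by apply/measurable_EFinP.
by rewrite (continuous_FTC2 ab cf dG Gf) EFinB.
Qed.
End S.

Lemma measF (R : realType) n (u : R) : 0 < u ->
  measurable_fun `]0, u] (@kac_F R n).
Proof.
move=> u0.
have h : measurable_fun `]0, u + 1[ (@kac_F R n).
  apply: open_continuous_measurable_fun; first exact: itv_open.
  move=> x; rewrite inE /= in_itv /= => /andP[x0 _]; exact: cont_F.
apply: measurable_funS h => //.
apply: subset_itvl; rewrite bnd_simp; lra.
Qed.

Section Main.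
Variable R : realType.
Lemma cont_g1 (N x : R) : 1 + N * (1 - x) != 0 ->
  {for x, continuous (fun w : R => 4 * N ^+ 2 / (1 + N * (1 - w)) ^+ 2)}.
Proof.
move=> h.
apply: continuousM; first exact: cst_continuous.
apply: continuousV; first exact: expf_neq0.
apply: differentiable_continuous; apply/derivable1_diffP.
exact: ex_derive.
Qed.
Lemma cont_g2 (N x : R) : 1 + N * (x - 1) != 0 ->
  {for x, continuous (fun w : R => 2 * N ^+ 2 / (1 + N * (w - 1)))}.
Proof.
move=> h.
apply: continuousM; first exact: cst_continuous.
apply: continuousV => //.
apply: differentiable_continuous; apply/derivable1_diffP.
exact: ex_derive.
Qed.

Lemma ln2_ge : 2^-1 <= ln (2 : R).
Proof.
have h : -1 < - 2^-1 :> R by lra.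
have := le_ln1Dx h.
have -> : 1 + - 2^-1 = (2 : R)^-1 by lra.
rewrite lnV ?posrE //; lra.
Qed.

Lemma ln2_le : ln (2 : R) <= 1.
Proof.
have h : -1 < 1 :> R by lra.
by have := le_ln1Dx h; rewrite (_ : 1 + 1 = 2).
Qed.

Lemma sq_aux (L : R) : 2 <= L -> 1 + L ^+ 2 <= 2 * L ^+ 2.
Proof. move=> h; nra. Qed.

Lemma final_arith (N L l G T : R) : 0 < N -> 2^-1 <= l ->
  G <= 4 * N -> T <= 1 + 2 * l -> G + 2 * N * T <= 16 * N * l.
Proof.
move=> N0 hl hG hT.
have h1 : 2 * N * T <= 2 * N * (1 + 2 * l) by rewrite ler_wpM2l // ltW // mulr_gt0.
have h2 : 0 <= N * (l - 2^-1) by rewrite mulr_ge0 ?subr_ge0 // ltW.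
nra.
Qed.

Theorem main_bound :
  exists C : R, exists N : nat, 0 < C /\
    forall n : nat, (N <= n)%N ->
      (\int[@lebesgue_measure R]_(w in `[0%R, (1 + (ln (n%:R : R)) ^+ 2 / n%:R)%R])
          (kac_F n w)%:E
        <= (C * n%:R * ln (ln (n%:R : R)))%:E)%E.
Proof.
exists 16, 16%N; split => // n n16.
have N16 : 16 <= n%:R :> R by rewrite (ler_nat R 16 n).
set N := n%:R : R in N16 *.
have N0 : 0 < N by lra.
set L := ln N.
have L2 : 2 <= L.
  have h16 : (2:R) ^+ 4 <= N.
    by rewrite (_ : (2:R) ^+ 4 = 16) ?N16 // -natrX.
  apply: (@le_trans _ _ (ln ((2:R) ^+ 4))).
    rewrite lnXn //; have := ln2_ge; rewrite -mulr_natr; lra.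
  by rewrite /L ler_ln ?posrE // exprn_gt0.
have lL : 2^-1 <= ln L.
  apply: (le_trans ln2_ge); rewrite ler_ln ?posrE //; lra.
set u := 1 + L ^+ 2 / N.
have u1 : 1 < u.
  rewrite /u ltrDl divr_gt0 // exprn_gt0 //; lra.
have u0 : 0 < u by lra.
rewrite -integral_itv_obnd_cbnd; last by apply/measurable_EFinP; apply: measF.
have e : `]0, u]%classic = `]0, 1] `|` `]1, u] :> set R.
  by apply: itv_bndbnd_setU; rewrite bnd_simp //; lra.
rewrite e ge0_integral_setU //; first last.
- apply: lt_disjoint => x y; rewrite !in_itv /= => /andP[_ x1] /andP[y1 _].
  lra.
- by move=> x _; rewrite lee_fin F_ge0.
- by rewrite -e; apply/measurable_EFinP; apply: measF.
pose G1 := fun w : R => 4 * N * (1 + N * (1 - w))^-1.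
pose g1 := fun w : R => 4 * N ^+ 2 / (1 + N * (1 - w)) ^+ 2.
pose G2 := fun w : R => 2 * N * ln (1 + N * (w - 1)).
pose g2 := fun w : R => 2 * N ^+ 2 / (1 + N * (w - 1)).
have p1 x : x <= 1 -> 0 < 1 + N * (1 - x).
  move=> x1; have : 0 <= N * (1 - x) by rewrite mulr_ge0 // ?subr_ge0 // ltW.
  lra.
have p2 x : 1 <= x -> 0 < 1 + N * (x - 1).
  move=> x1; have : 0 <= N * (x - 1) by rewrite mulr_ge0 // ?subr_ge0 // ltW.
  lra.
have I1 : (\int[@lebesgue_measure R]_(x in `]0%R, 1%R]) (kac_F n x)%:E
            <= (G1 1 - G1 0)%:E)%E.
  apply: int_step.
  - exact: ltr01.
  - exact: measF.
  - move=> x /andP[x0 x1]; rewrite F_ge0 /=; apply: bnd1.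
      by apply: leq_trans n16.
    by rewrite x0 x1.
  - apply: continuous_in_subspaceT => x; rewrite inE /= in_itv /= => /andP[x0 x1].
    by apply: cont_g1; rewrite gt_eqF // p1.
  - split.
    + move=> x; rewrite in_itv /= => /andP[x0 x1].
      by case: (@dG1 R N x (lt0r_neq0 (p1 x (ltW x1)))).
    + apply: cvg_at_right_filter; apply: differentiable_continuous.
      apply/derivable1_diffP; case: (@dG1 R N 0 (lt0r_neq0 (p1 0 ler01))) => //.
    + apply: cvg_at_left_filter; apply: differentiable_continuous.
      apply/derivable1_diffP; case: (@dG1 R N 1 (lt0r_neq0 (p1 1 (lexx 1)))) => //.
  - move=> x; rewrite in_itv /= => /andP[x0 x1].
    by rewrite derive1E; case: (@dG1 R N x (lt0r_neq0 (p1 x (ltW x1)))) => _ ->.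
have I2 : (\int[@lebesgue_measure R]_(x in `]1%R, u]) (kac_F n x)%:E
            <= (G2 u - G2 1)%:E)%E.
  apply: int_step.
  - exact: u1.
  - apply: measurable_funS (@measF R n u u0) => //.
    by apply: subset_itvr; rewrite bnd_simp.
  - move=> x /andP[x0 x1]; rewrite F_ge0 /=; apply: bnd2; exact: ltW.
  - apply: continuous_in_subspaceT => x; rewrite inE /= in_itv /= => /andP[x0 x1].
    by apply: cont_g2; rewrite gt_eqF // p2.
  - split.
    + move=> x; rewrite in_itv /= => /andP[x0 x1].
      by case: (@dG2 R N x (p2 x (ltW x0))).
    + apply: cvg_at_right_filter; apply: differentiable_continuous.
      apply/derivable1_diffP; case: (@dG2 R N 1 (p2 1 (lexx 1))) => //.
    + apply: cvg_at_left_filter; apply: differentiable_continuous.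
      apply/derivable1_diffP; case: (@dG2 R N u (p2 u (ltW u1))) => //.
  - move=> x; rewrite in_itv /= => /andP[x0 x1].
    by rewrite derive1E; case: (@dG2 R N x (p2 x (ltW x0))) => _ ->.
apply: (le_trans (leeD I1 I2)); rewrite -EFinD lee_fin.
have hG1 : G1 1 - G1 0 <= 4 * N.
  rewrite /G1 subrr mulr0 addr0 invr1 mulr1 lerBlDr lerDl.
  apply: mulr_ge0; first by rewrite mulr_ge0 // ltW.
  by rewrite invr_ge0 ltW // p1.
have hG2 : G2 u - G2 1 = 2 * N * ln (1 + L ^+ 2).
  rewrite /G2 subrr mulr0 addr0 ln1 mulr0 subr0 /u.
  rewrite addrAC subrr add0r.
  have -> : N * (L ^+ 2 / N) = L ^+ 2 by rewrite mulrC divfK // gt_eqF.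
  by [].
have L0 : 0 < L by apply: lt_le_trans L2.
have hln : ln (1 + L ^+ 2) <= 1 + 2 * ln L.
  apply: (@le_trans _ _ (ln (2 * L ^+ 2))).
    have hL2 : 0 < L ^+ 2 by exact: exprn_gt0.
    rewrite ler_ln ?posrE ?mulr_gt0 ?addr_gt0 //.
    by apply: sq_aux.
  have hL2 : 0 < L ^+ 2 by exact: exprn_gt0.
  rewrite lnM ?posrE // lnXn //.
  by apply: lerD; [exact: ln2_le | rewrite mulr_natl].
rewrite hG2.
by apply: final_arith hG1 hln.
Qed.
End Main.


Theorem proposition3p1 (R : realType) :
  exists C : R, exists N : nat, 0 < C /\
    forall n : nat, (N <= n)%N ->
      (\int[@lebesgue_measure R]_(w in `[0%R, (1 + (ln (n%:R : R)) ^+ 2 / n%:R)%R])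
          (kac_F n w)%:E
        <= (C * n%:R * ln (ln (n%:R : R)))%:E)%E.
Proof. exact: main_bound. Qed.
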